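(* Let $\mathcal{A}\subset\mathbb{R}^d$ be a finite set and $\mathcal{X}=\{x_1,\dots,x_K\}\subset\mathbb{R}^d$. Let $\tilde{\mathbf p}\in\Delta^{(K)}$ be a minimizer of $\mathbf p\mapsto\max_{u,u'\in\mathcal{A}}\|u-u'\|^2_{\mathbf\Sigma_{-1,\mathbf p}^{-1}}$ over $\Delta^{(K)}$ with $\tilde p_1=0$, and define $\mathbf p_{\mathrm{xor}}(\mathcal{A}):=(\tfrac12,\tfrac12\tilde p_2,\dots,\tfrac12\tilde p_K)\in\Delta^{(K)}$. Then $$\mathcal{V}_{\mathrm{cov}}(\mathcal{A}:\mathcal{X},\mathbf p_{\mathrm{xor}}(\mathcal{A}))\le 4\,\mathcal{V}^\star_{\mathrm{lin}}(\mathcal{A}:\mathcal{X}-x_1).$$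
   Context: $\Delta^{(K)}$ is the probability simplex on $[K]$. For $\mathbf p\in\Delta^{(K)}$: $\bar x_{\mathbf p}:=\sum_ip_ix_i$, $\mathbf\Sigma_{\mathrm{cov},\mathbf p}:=\sum_{i=1}^Kp_i(x_i-\bar x_{\mathbf p})(x_i-\bar x_{\mathbf p})^\top$, and $\mathbf\Sigma_{-1,\mathbf p}:=\sum_{i=1}^Kp_i(x_i-x_1)(x_i-x_1)^\top$. For PSD $\mathbf A$, $\|x\|_{\mathbf A^{-1}}:=\lim_{\lambda\to0^+}\sqrt{x^\top(\mathbf A+\lambda\mathbf I_d)^{-1}x}$ (possibly $+\infty$). Define $\mathcal{V}_{\mathrm{cov}}(\mathcal{A}:\mathcal{X},\mathbf p):=\max_{u,u'\in\mathcal{A}}\|u-u'\|^2_{\mathbf\Sigma_{\mathrm{cov},\mathbf p}^{-1}}$ and $\mathcal{V}^\star_{\mathrm{lin}}(\mathcal{A}:\mathcal{X}-x_1):=\min_{\mathbf p\in\Delta^{(K)}}\max_{u,u'\in\mathcal{A}}\|u-u'\|^2_{\mathbf\Sigma_{-1,\mathbf p}^{-1}}$. (A minimizer with $\tilde p_1=0$ exists since the term $i=1$ contributes zero to $\mathbf\Sigma_{-1,\mathbf p}$.) *)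

(* Defs.v *)
From HB Require Import structures.
From mathcomp Require Import all_boot all_order all_algebra.
From mathcomp Require Import all_classical all_reals all_analysis.
Set Implicit Arguments. Unset Strict Implicit. Unset Printing Implicit Defensive.
Import Order.TTheory GRing.Theory Num.Theory.
Import numFieldNormedType.Exports.
Local Open Scope classical_set_scope.
Local Open Scope ring_scope.

(* Points x_1..x_K are indexed by 'I_K.+1 ; x_1 is x ord0. *)

Section Defs.
Variable R : realType.
Variable d : nat.

Definition simplex (n : nat) (p : 'I_n -> R) : Prop :=
  (forall i, 0 <= p i) /\ \sum_(i < n) p i = 1.

Definition inv_norm (A : 'M[R]_d) (x : 'cV[R]_d) : \bar R :=
  lim ((fun l : R => (Num.sqrt ((x^T *m invmx (A + l%:M) *m x) 0 0))%:E)
         @ 0^'+).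

Definition inv_normsq (A : 'M[R]_d) (x : 'cV[R]_d) : \bar R :=
  (inv_norm A x * inv_norm A x)%E.

Definition maxdiff (Aset : seq 'cV[R]_d) (M : 'M[R]_d) : \bar R :=
  \big[Order.max/-oo%E]_(u <- Aset) \big[Order.max/-oo%E]_(u' <- Aset)
     inv_normsq M (u - u').

Definition xbar (n : nat) (x : 'I_n -> 'cV[R]_d) (p : 'I_n -> R) : 'cV[R]_d :=
  \sum_(i < n) p i *: x i.

Definition Sigma_cov (n : nat) (x : 'I_n -> 'cV[R]_d) (p : 'I_n -> R)
  : 'M[R]_d :=
  \sum_(i < n) p i *: ((x i - xbar x p) *m (x i - xbar x p)^T).

Definition Sigma_m1 (K : nat) (x : 'I_K.+1 -> 'cV[R]_d) (p : 'I_K.+1 -> R)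
  : 'M[R]_d :=
  \sum_(i < K.+1) p i *: ((x i - x ord0) *m (x i - x ord0)^T).

Definition V_cov (Aset : seq 'cV[R]_d) (n : nat) (x : 'I_n -> 'cV[R]_d)
  (p : 'I_n -> R) : \bar R :=
  maxdiff Aset (Sigma_cov x p).

Definition lin_obj (Aset : seq 'cV[R]_d) (K : nat)
  (x : 'I_K.+1 -> 'cV[R]_d) (p : 'I_K.+1 -> R) : \bar R :=
  maxdiff Aset (Sigma_m1 x p).

(* V*_lin := min over the simplex (written as an infimum; it is attained) *)
Definition Vstar_lin (Aset : seq 'cV[R]_d) (K : nat)
  (x : 'I_K.+1 -> 'cV[R]_d) : \bar R :=
  ereal_inf [set lin_obj Aset x p | p in [set p | simplex p]].

Definition p_xor (K : nat) (pt : 'I_K.+1 -> R) : 'I_K.+1 -> R :=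
  fun i => if i == ord0 then 2^-1 else pt i / 2.

End Defs.

(* Main.v *)
Require Import Defs.
From HB Require Import structures.
From mathcomp Require Import all_boot all_order all_algebra.
From mathcomp Require Import all_classical all_reals all_analysis.
From mathcomp Require Import ring lra.
Import Order.TTheory GRing.Theory Num.Theory.
Local Open Scope ring_scope.

Section Aux.
Variable R : realType.
Variable d : nat.

Definition qf (M : 'M[R]_d) (w : 'cV[R]_d) : R := (w^T *m M *m w) 0 0.
Definition dotv (u v : 'cV[R]_d) : R := (u^T *m v) 0 0.

Lemma mx11M (A B : 'M[R]_1) :
  (A *m B) 0 0 = A 0 0 * B 0 0.
Proof. by rewrite [in LHS]mxE big_ord1. Qed.

Lemma tr11 (A : 'M[R]_1) : A^T 0 0 = A 0 0.
Proof. by rewrite mxE. Qed.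

Lemma qfD M N w : qf (M + N) w = qf M w + qf N w.
Proof. by rewrite /qf mulmxDr mulmxDl mxE. Qed.

Lemma qfZ c M w : qf (c *: M) w = c * qf M w.
Proof. rewrite /qf. have H := scalemxAr c (w^T) M. rewrite -H -scalemxAl mxE. done. Qed.

Lemma qf0 w : qf 0 w = 0.
Proof. by rewrite /qf mulmx0 mul0mx mxE. Qed.

Lemma qf_sum n (F : 'I_n -> 'M[R]_d) w :
  qf (\sum_(i < n) F i) w = \sum_(i < n) qf (F i) w.
Proof.
by apply: (big_morph (fun M => qf M w) (fun M N => qfD M N w) (qf0 w)).
Qed.

Lemma qf_scalar l w : qf (l%:M) w = l * dotv w w.
Proof. by rewrite /qf /dotv mul_mx_scalar -scalemxAl mxE. Qed.

Lemma dotvC u v : dotv u v = dotv v u.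
Proof. by rewrite /dotv -[LHS]tr11 trmx_mul trmxK. Qed.

Lemma qf_outer a w : qf (a *m a^T) w = (dotv w a) ^+ 2.
Proof.
rewrite /qf mulmxA -mulmxA mx11M -/(dotv w a).
by rewrite -/(dotv a w) dotvC expr2.
Qed.

Lemma dotvB w a b : dotv w (a - b) = dotv w a - dotv w b.
Proof. by rewrite /dotv mulmxBr mxE [X in _ + X]mxE. Qed.

Lemma dotvZ w c a : dotv w (c *: a) = c * dotv w a.
Proof. by rewrite /dotv -scalemxAr mxE. Qed.

Lemma dotv_sum n w (F : 'I_n -> 'cV[R]_d) :
  dotv w (\sum_(i < n) F i) = \sum_(i < n) dotv w (F i).
Proof.
rewrite /dotv.
apply: (big_morph (fun a => (w^T *m a) 0 0)).
  by move=> a b; rewrite mulmxDr mxE.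
by rewrite mulmx0 mxE.
Qed.

Lemma dotv_ge0 w : 0 <= dotv w w.
Proof.
rewrite /dotv mxE; apply: sumr_ge0 => i _; rewrite mxE -expr2; exact: sqr_ge0.
Qed.

Lemma dotv_gt0 (v : 'rV[R]_d) : v != 0 -> 0 < dotv v^T v^T.
Proof.
move=> v0.
have [j vj] : exists j, v 0 j != 0.
  apply/existsP; apply: contraNT v0; rewrite negb_exists => /forallP H.
  apply/eqP/matrixP => i j; rewrite ord1 mxE; exact/eqP/negPn/H.
rewrite /dotv trmxK mxE (bigD1 j) //= ltr_wpDr //.
  by apply: sumr_ge0 => i _; rewrite !mxE -expr2 sqr_ge0.
by rewrite !mxE lt_def mulf_neq0 //= -expr2 sqr_ge0.
Qed.

Lemma mxEB (A B : 'M[R]_1) : (A - B) 0 0 = A 0 0 - B 0 0.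
Proof. by rewrite mxE [X in _ + X]mxE. Qed.

Lemma unit_shift M l : (forall w, 0 <= qf M w) -> 0 < l -> M + l%:M \in unitmx.
Proof.
move=> M0 l0; rewrite unitmxE unitfE; apply/negP => /det0P [v v0 vC].
have : qf (M + l%:M) v^T = 0 by rewrite /qf trmxK vC mul0mx mxE.
rewrite qfD qf_scalar => /eqP; apply/negP; rewrite gt_eqF //.
have := M0 v^T; have := mulr_gt0 l0 (dotv_gt0 _ v0); lra.
Qed.

Lemma qf_inv_ub C x v : C^T = C -> C \in unitmx -> (forall w, 0 <= qf C w) ->
  2 * dotv v x - qf C v <= qf (invmx C) x.
Proof.
move=> Csym Cu C0.
set z := invmx C *m x.
have Cz : C *m z = x by rewrite /z mulmxA mulmxV // mul1mx.
have zC : z^T *m C = x^T.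
  by rewrite /z trmx_mul trmx_inv Csym -mulmxA mulVmx // mulmx1.
have H := C0 (v - z).
have E : qf C (v - z) = qf C v - 2 * dotv v x + qf (invmx C) x.
  have tB : (v - z)^T = v^T - z^T by rewrite linearB.
  rewrite /qf tB mulmxBl zC mulmxBr !mulmxBl -(mulmxA v^T C z) Cz.
  rewrite !mxEB /z mulmxA -/(dotv v x) -/(dotv x v) dotvC.
  by rewrite -/(qf C v) -/(qf (invmx C) x); ring.
rewrite E in H; lra.
Qed.

Lemma qf_inv_eq C x : C^T = C -> C \in unitmx ->
  qf (invmx C) x = 2 * dotv (invmx C *m x) x - qf C (invmx C *m x).
Proof.
move=> Csym Cu.
have zT : (invmx C *m x)^T = x^T *m invmx C by rewrite trmx_mul trmx_inv Csym.
rewrite /qf /dotv zT -(mulmxA x^T (invmx C) C) mulVmx // mulmx1.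
rewrite -/(qf (invmx C) x) -/(dotv x (invmx C *m x)) /dotv mulmxA.
rewrite -/(qf (invmx C) x); ring.
Qed.

Lemma qf_inv_mono C1 C2 x : C1^T = C1 -> C2^T = C2 -> C1 \in unitmx ->
  C2 \in unitmx -> (forall w, 0 <= qf C1 w) -> (forall w, qf C1 w <= qf C2 w) ->
  qf (invmx C2) x <= qf (invmx C1) x.
Proof.
move=> S1 S2 U1 U2 P1 L; rewrite (qf_inv_eq C2 x S2 U2).
apply: le_trans (qf_inv_ub C1 x (invmx C2 *m x) S1 U1 P1).
by rewrite lerD2l lerN2.
Qed.

Lemma sym_shift (A : 'M[R]_d) l : A^T = A -> (A + l%:M)^T = A + l%:M.
Proof. by move=> As; rewrite linearD /= tr_scalar_mx As. Qed.

Lemma psd_shift (A : 'M[R]_d) l : (forall w, 0 <= qf A w) -> 0 <= l ->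
  forall w, 0 <= qf (A + l%:M) w.
Proof.
by move=> A0 l0 w; rewrite qfD qf_scalar addr_ge0 // mulr_ge0 // dotv_ge0.
Qed.

Definition hA (A : 'M[R]_d) x l := Num.sqrt (qf (invmx (A + l%:M)) x).

Lemma hA_ge0 A x l : 0 <= hA A x l.
Proof. exact: sqrtr_ge0. Qed.

Lemma inv_norm_sup (A : 'M[R]_d) x : A^T = A -> (forall w, 0 <= qf A w) ->
  inv_norm A x = ereal_sup ((fun l => (hA A x l)%:E) @` [set` `]0, +oo[%R]).
Proof.
move=> As A0; rewrite /inv_norm; apply: cvg_lim; first exact: ereal_hausdorff.
apply: (@nonincreasing_at_right_cvge R (fun l => (hA A x l)%:E) 0 (BInfty _ false)).
  by [].
move=> l1 l2; rewrite !in_itv /= !andbT => l10 l20 l12.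
rewrite lee_fin; apply: ler_wsqrtr; apply: qf_inv_mono.
- exact: sym_shift.
- exact: sym_shift.
- exact: unit_shift.
- exact: unit_shift.
- by apply: psd_shift => //; exact: ltW.
- by move=> w; rewrite !qfD !qf_scalar lerD2l ler_wpM2r // dotv_ge0.
Qed.

Lemma key_cmp (A B : 'M[R]_d) x l : A^T = A -> B^T = B ->
  (forall w, 0 <= qf B w) -> (forall w, qf B w / 4 <= qf A w) -> 0 < l ->
  qf (invmx (A + l%:M)) x <= 4 * qf (invmx (B + (4 * l)%:M)) x.
Proof.
move=> As Bs B0 QB l0.
have A0 : forall w, 0 <= qf A w.
  by move=> w; apply: le_trans (QB w); rewrite divr_ge0.
have l4 : 0 < 4 * l by rewrite mulr_gt0.
have u4 : (4 : R)^-1 \is a GRing.unit by rewrite unitfE invr_neq0.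
have U1 : 4^-1 *: (B + (4 * l)%:M) \in unitmx.
  by rewrite unitmxZ // unit_shift.
have := @qf_inv_mono (4^-1 *: (B + (4 * l)%:M)) (A + l%:M) x.
rewrite invmxZ // invrK qfZ; apply.
- by rewrite linearZ /= sym_shift.
- exact: sym_shift.
- exact: U1.
- exact: unit_shift.
- move=> w; rewrite qfZ mulr_ge0 ?invr_ge0 //; apply: psd_shift => //; exact: ltW.
- move=> w; rewrite qfZ !qfD !qf_scalar.
  have := QB w; have := dotv_ge0 w; nra.
Qed.

Lemma inv_norm_cmp (A B : 'M[R]_d) x : A^T = A -> B^T = B ->
  (forall w, 0 <= qf B w) -> (forall w, qf B w / 4 <= qf A w) ->
  (inv_norm A x <= 2%:E * inv_norm B x)%E.
Proof.
move=> As Bs B0 QB.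
have A0 : forall w, 0 <= qf A w.
  by move=> w; apply: le_trans (QB w); rewrite divr_ge0.
rewrite (inv_norm_sup A x As A0) (inv_norm_sup B x Bs B0).
apply: ge_ereal_sup => _ [l /= l0 <-].
have l0' : 0 < l by move: l0; rewrite /= in_itv /= andbT.
have l4 : 0 < 4 * l by rewrite mulr_gt0.
apply: (@le_trans _ _ (2%:E * (hA B x (4 * l))%:E)%E).
  rewrite -EFinM lee_fin /hA.
  have s4 : Num.sqrt (4 : R) = 2.
    by rewrite (_ : (4 : R) = 2 ^+ 2) ?sqrtr_sqr ?ger0_norm //; ring.
  rewrite -s4 -sqrtrM //; apply: ler_wsqrtr; exact: key_cmp.
apply: lee_wpmul2l => //; apply: ereal_sup_ubound => /=.
by exists (4 * l) => //=; rewrite in_itv /= andbT.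
Qed.

Lemma inv_norm_ge0 (A : 'M[R]_d) x : A^T = A -> (forall w, 0 <= qf A w) ->
  (0 <= inv_norm A x)%E.
Proof.
move=> As A0; rewrite (inv_norm_sup A x As A0).
apply: (@le_trans _ _ (hA A x 1)%:E); first by rewrite lee_fin hA_ge0.
by apply: ereal_sup_ubound; exists 1 => //=; rewrite in_itv /= andbT.
Qed.

Lemma inv_normsq_cmp (A B : 'M[R]_d) x : A^T = A -> B^T = B ->
  (forall w, 0 <= qf B w) -> (forall w, qf B w / 4 <= qf A w) ->
  (inv_normsq A x <= 4%:E * inv_normsq B x)%E.
Proof.
move=> As Bs B0 QB.
have A0 : forall w, 0 <= qf A w.
  by move=> w; apply: le_trans (QB w); rewrite divr_ge0.
have a0 := inv_norm_ge0 A x As A0; have b0 := inv_norm_ge0 B x Bs B0.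
have H := inv_norm_cmp A B x As Bs B0 QB.
rewrite /inv_normsq; apply: (@le_trans _ _ ((2%:E * inv_norm B x) * (2%:E * inv_norm B x))%E).
  exact: lee_pmul.
set b := inv_norm B x.
rewrite muleA -[(2%:E * b * 2%:E)%E]muleA (muleC b 2%:E) muleA -EFinM -muleA.
by rewrite (_ : (2 * 2 : R) = 4) //; ring.
Qed.

Lemma outer_sym n (p : 'I_n -> R) (a : 'I_n -> 'cV[R]_d) :
  (\sum_(i < n) p i *: (a i *m (a i)^T))^T = \sum_(i < n) p i *: (a i *m (a i)^T).
Proof.
rewrite linear_sum; apply: eq_bigr => i _.
by rewrite linearZ /= trmx_mul trmxK.
Qed.

Lemma outer_qf n (p : 'I_n -> R) (a : 'I_n -> 'cV[R]_d) w :
  qf (\sum_(i < n) p i *: (a i *m (a i)^T)) w = \sum_(i < n) p i * (dotv w (a i)) ^+ 2.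
Proof.
rewrite qf_sum; apply: eq_bigr => i _; by rewrite qfZ qf_outer.
Qed.

End Aux.
Arguments dotv {R d}.
Arguments qf {R d}.
Arguments hA {R d}.

Lemma sum_sq_expand (R : realType) n (q s : 'I_n -> R) c :
  \sum_(i < n) q i * (s i - c) ^+ 2 =
  \sum_(i < n) q i * s i ^+ 2 - 2 * c * \sum_(i < n) q i * s i
    + c ^+ 2 * \sum_(i < n) q i.
Proof.
have E : forall i, q i * (s i - c) ^+ 2 =
    q i * s i ^+ 2 - (2 * c) * (q i * s i) + c ^+ 2 * q i by move=> i; ring.
rewrite (eq_bigr _ (fun i _ => E i)) big_split sumrB /=.
by rewrite -!mulr_sumr.
Qed.

Lemma sum_pxor (R : realType) K (pt : 'I_K.+1 -> R) (g : 'I_K.+1 -> R) :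
  pt ord0 = 0 ->
  \sum_(i < K.+1) p_xor pt i * g i = (\sum_(i < K.+1) pt i * g i) / 2 + g ord0 / 2.
Proof.
move=> p0.
rewrite (bigD1 ord0) //= [X in _ = X / 2 + _](bigD1 ord0) //= p0 mul0r add0r.
rewrite /p_xor eqxx mulr_suml.
rewrite (eq_bigr (fun i => pt i * g i / 2)); last first.
  by move=> i /negbTE ->; rewrite mulrAC.
by rewrite addrC mulrC.
Qed.

Lemma scalar_ineq (R : realType) K (pt s : 'I_K.+1 -> R) :
  simplex pt -> pt ord0 = 0 -> s ord0 = 0 ->
  (\sum_(i < K.+1) pt i * s i ^+ 2) / 4 <=
  \sum_(i < K.+1) p_xor pt i *
     (s i - \sum_(j < K.+1) p_xor pt j * s j) ^+ 2.
Proof.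
move=> [pge psum] p0 s0.
rewrite sum_sq_expand.
have h1 := @sum_pxor R K pt (fun i => s i ^+ 2) p0.
have h2 := @sum_pxor R K pt s p0.
have h3 : \sum_(i < K.+1) p_xor pt i = 1.
  rewrite (eq_bigr (fun i => p_xor pt i * 1)); last by move=> i _; rewrite mulr1.
  rewrite sum_pxor // (eq_bigr (fun i => pt i)); last by move=> i _; rewrite mulr1.
  rewrite psum; lra.
rewrite /= s0 expr2 mul0r in h1.
rewrite s0 in h2.
rewrite h1 h2 h3.
set T := \sum_(i < K.+1) pt i * s i ^+ 2.
set M := \sum_(i < K.+1) pt i * s i.
have V : 0 <= \sum_(i < K.+1) pt i * (s i - M) ^+ 2.
  by apply: sumr_ge0 => i _; rewrite mulr_ge0 // sqr_ge0.
rewrite sum_sq_expand psum -/T -/M in V.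
nra.
Qed.

Lemma bigmax_le_aux (R : realType) (I : eqType) (s : seq I) (F : I -> \bar R) y :
  (forall i, i \in s -> (F i <= y)%E) ->
  (\big[Order.max/-oo%E]_(i <- s) F i <= y)%E.
Proof.
elim: s => [|a s IH] H; first by rewrite big_nil leNye.
rewrite big_cons ge_max H ?mem_head //= IH // => i Hi.
by apply: H; rewrite in_cons Hi orbT.
Qed.

Lemma cov_dot (R : realType) d n (x : 'I_n -> 'cV[R]_d) (p : 'I_n -> R) (c w : 'cV[R]_d) i :
  \sum_(j < n) p j = 1 ->
  dotv w (x i - xbar x p) =
  dotv w (x i - c) - \sum_(j < n) p j * dotv w (x j - c).
Proof.
move=> ps; rewrite /xbar !dotvB dotv_sum.
under eq_bigr do rewrite dotvZ.
under [X in _ = _ - X]eq_bigr do rewrite dotvB mulrBr.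
rewrite sumrB -mulr_suml ps mul1r; ring.
Qed.

Theorem mainTheorem4 (R : realType) (d K : nat)
  (Aset : seq 'cV[R]_d) (x : 'I_K.+1 -> 'cV[R]_d) (pt : 'I_K.+1 -> R) :
  simplex pt ->
  (forall p : 'I_K.+1 -> R, simplex p ->
     (lin_obj Aset x pt <= lin_obj Aset x p)%E) ->
  pt ord0 = 0 ->
  (V_cov Aset x (p_xor pt) <= 4%:E * Vstar_lin Aset x)%E.
Proof.
move=> spt Hmin p0.
have h3 : \sum_(i < K.+1) p_xor pt i = 1.
  rewrite (eq_bigr (fun i => p_xor pt i * 1)); last by move=> i _; rewrite mulr1.
  rewrite sum_pxor // (eq_bigr (fun i => pt i)); last by move=> i _; rewrite mulr1.
  case: spt => _ ->; lra.
apply: (@le_trans _ _ (4%:E * lin_obj Aset x pt)%E); last first.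
  apply: lee_wpmul2l => //; apply/ereal_infP => _ [p sp <-]; exact: Hmin.
rewrite /V_cov /lin_obj /maxdiff.
apply: bigmax_le_aux => u uA; apply: bigmax_le_aux => u' u'A.
apply: (@le_trans _ _ (4%:E * inv_normsq (Sigma_m1 x pt) (u - u'))%E).
  apply: inv_normsq_cmp.
  - exact: outer_sym.
  - exact: outer_sym.
  - move=> w; rewrite /Sigma_m1 outer_qf; apply: sumr_ge0 => i _.
    by case: spt => pge _; rewrite mulr_ge0 // sqr_ge0.
  - move=> w; rewrite /Sigma_m1 /Sigma_cov !outer_qf.
    under [X in _ <= X]eq_bigr do rewrite (@cov_dot R d K.+1 x (p_xor pt) (x ord0) w _ h3).
    apply: scalar_ineq => //.
    by rewrite subrr /dotv mulmx0 mxE.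
apply: lee_wpmul2l => //.
have H1 := @le_bigmax_seq _ _ _ Aset -oo%E u' xpredT
  (fun v => inv_normsq (Sigma_m1 x pt) (u - v)) u'A isT.
have H2 := @le_bigmax_seq _ _ _ Aset -oo%E u xpredT
  (fun v => \big[Order.max/-oo%E]_(u'0 <- Aset) inv_normsq (Sigma_m1 x pt) (v - u'0))
  uA isT.
exact: le_trans H1 H2.
Qed.
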